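(* Let $A$ be a finite set, $p : A \to [0,1]$, and $\gamma : \mathbb{N}^* \to (0,1]$ non-increasing; set $p_i(u) := \gamma(i)p(u)$. Let $\{X_i(u)\}_{i\ge1,u\in A}$ be independent with $X_i(u)\sim\mathrm{Bernoulli}(p_i(u))$. For $n \ge 1$ define $Z_n(u) := \mathds{1}\{X_1(u)=\dots=X_n(u)=0\}$, $R_n := \sum_{u\in A} Z_n(u)\,p_{n+1}(u)$, \[ U^\gamma_n(u) := \sum_{i=1}^n \mathds{1}\{X_i(u)=1,\ X_j(u)=0\ \forall j\in\{1,\dots,n\}\setminus\{i\}\}\,\frac{\gamma(n+1)}{\gamma(i)}, \] $\hat R_n := \frac1n\sum_{u\in A}U^\gamma_n(u)$, $\lambda := \sum_{u\in A}p(u)$ and $\lambda_m := \gamma(m)\lambda$. For $\delta\in(0,1)$ let \[ \beta_n := (1+\sqrt2)\sqrt{\frac{\lambda_{n+1}\log(4/\delta)}{n}} + \frac{1}{3n}\log\frac4\delta . \] Then with probability at least $1-\delta$, \[ -\beta_n - \frac{\lambda}{n} \le R_n - \hat R_n \le \beta_n . \]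
   Context: Influencer fatigue model: at the $i$-th selection of the influencer, node $u$ is activated with probability $\gamma(i)p(u)$, independently across nodes and selections. $R_n$ is the remaining potential for the $(n+1)$-th selection, $\hat R_n$ the reweighted Good-Turing estimator. *)

(* Defs.v *)
From mathcomp Require Import all_boot.
From Stdlib Require Import Reals.
Set Implicit Arguments. Unset Strict Implicit. Unset Printing Implicit Defensive.
Open Scope R_scope.

Definition Rleb (x y : R) : bool := if Rle_dec x y then true else false.

Notation "\rsum_ ( i : T ) F" := (\big[Rplus/0%R]_(i : T) F)
  (at level 41, F at level 41, i at level 50).
Notation "\rsum_ ( i : T | P ) F" := (\big[Rplus/0%R]_(i : T | P) F)
  (at level 41, F at level 41, i at level 50).
Notation "\rprod_ ( i : T ) F" := (\big[Rmult/1%R]_(i : T) F)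
  (at level 36, F at level 36, i at level 50).

Section Fatigue.
Variables (A : finType) (p : A -> R) (gamma : nat -> R).

(* p_i(u) = gamma(i) p(u); selections are indexed from 1 *)
Definition pi (i : nat) (u : A) : R := gamma i * p u.

(* An outcome of the first n selections: w (i, u) = X_{i+1}(u), i : 'I_n. *)
Definition outcome (n : nat) := {ffun 'I_n * A -> bool}.

Definition weight (n : nat) (w : outcome n) : R :=
  \rprod_(iu : 'I_n * A)
    (if w iu then pi (iu.1).+1 iu.2 else 1 - pi (iu.1).+1 iu.2).

Definition prob (n : nat) (E : outcome n -> bool) : R :=
  \rsum_(w : outcome n | E w) weight w.

Definition Zn (n : nat) (w : outcome n) (u : A) : bool :=
  [forall i : 'I_n, ~~ w (i, u)].

Definition Rn (n : nat) (w : outcome n) : R :=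
  \rsum_(u : A) (if Zn w u then pi n.+1 u else 0).

Definition Ugam (n : nat) (w : outcome n) (u : A) : R :=
  \rsum_(i : 'I_n)
    (if w (i, u) && [forall j : 'I_n, (j != i) ==> ~~ w (j, u)]
     then gamma n.+1 / gamma i.+1 else 0).

Definition Rhat (n : nat) (w : outcome n) : R :=
  / INR n * \rsum_(u : A) Ugam w u.

Definition lambda : R := \rsum_(u : A) p u.

Definition lambda_m (m : nat) : R := gamma m * lambda.

Definition beta (n : nat) (delta : R) : R :=
  (1 + sqrt 2) * sqrt (lambda_m n.+1 * ln (4 / delta) / INR n)
  + / (3 * INR n) * ln (4 / delta).

End Fatigue.

(* Main.v *)
Require Import Defs.
From mathcomp Require Import all_boot.
From Stdlib Require Import Reals Lra Classical.
From Coquelicot Require Coquelicot.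
From HB Require Import structures.
Open Scope R_scope.


Lemma RplusA : associative Rplus. Proof. by move=> x y z; rewrite Rplus_assoc. Qed.
Lemma RmultA : associative Rmult. Proof. by move=> x y z; rewrite Rmult_assoc. Qed.
HB.instance Definition _ := Monoid.isComLaw.Build R 0 Rplus RplusA Rplus_comm Rplus_0_l.
HB.instance Definition _ := Monoid.isComLaw.Build R 1 Rmult RmultA Rmult_comm Rmult_1_l.
HB.instance Definition _ := Monoid.isMulLaw.Build R 0 Rmult Rmult_0_l Rmult_0_r.
HB.instance Definition _ := Monoid.isAddLaw.Build R Rmult Rplus Rmult_plus_distr_r Rmult_plus_distr_l.




Module AnL.
Import Coquelicot.Coquelicot.
Lemma mono0 (f f' : R -> R) :
  (forall c, 0 <= c -> is_derive f c (f' c)) ->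
  (forall c, 0 <= c -> 0 <= f' c) -> forall x, 0 <= x -> f 0 <= f x.
Proof.
intros Hd Hp x Hx. destruct (Req_dec x 0) as [->|Hx0]; [lra|].
destruct (MVT_cor2 f f' 0 x) as [c [Hc1 Hc2]]; [lra| |].
- intros c Hc. apply is_derive_Reals. apply Hd. lra.
- assert (0 <= f' c * (x - 0)) by (apply Rmult_le_pos; [apply Hp; lra | lra]). lra.
Qed.

Lemma exp_neg_le (v : R) : 0 <= v -> exp (- v) <= 1 - v + v ^ 2 / 2.
Proof.
intros Hv.
assert (H := mono0 (fun v => 1 - v + v ^ 2 / 2 - exp (- v))
  (fun v => -1 + v + exp (- v))).
simpl in H. rewrite Ropp_0 exp_0 in H.
assert (0 <= 1 - v + v * (v * 1) / 2 - exp (- v)).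
{ replace 0 with (1 - 0 + 0 * (0*1) / 2 - 1) at 1 by field.
  apply H; auto.
  - intros c _. auto_derive; auto. lra.
  - intros c _. pose proof (exp_ineq1_le (- c)). lra. }
simpl. lra.
Qed.

Lemma exp_taylor2 (x : R) : 0 <= x -> exp x - 1 - x <= x ^ 2 / 2 * exp x.
Proof.
intros Hx.
assert (H := mono0 (fun x => x ^ 2 / 2 * exp x - exp x + 1 + x)
  (fun x => exp x * (x + x ^ 2 / 2 - 1) + 1)).
simpl in H. rewrite exp_0 in H.
assert (0 <= x * (x * 1) / 2 * exp x - exp x + 1 + x).
{ assert (0 = 0 * (0*1) / 2 * 1 - 1 + 1 + 0) by lra. rewrite H0.
  apply H; auto.
  - intros c _. auto_derive; auto. lra.
  - intros c _. pose proof (exp_ineq1_le (- c)).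
    pose proof (exp_pos c).
    assert (exp c * exp (-c) = 1) by (rewrite -exp_plus; replace (c + -c) with 0 by ring; apply exp_0).
    assert (exp c * (exp (-c) + c + c * (c*1)/2 - 1) >= 0).
    { apply Rle_ge, Rmult_le_pos; nra. }
    simpl. nra. }
simpl. lra.
Qed.

Lemma exp_bern0 (v : R) : 0 <= v -> exp v * (1 - v / 3) <= 1 + 2 * v / 3 + v ^ 2 / 6.
Proof.
intros Hv.
assert (H1 : forall w, 0 <= w -> 0 <= 2/3 + w/3 - exp w * (2/3 - w/3)).
{ intros w Hw.
  assert (H := mono0 (fun w => 2/3 + w/3 - exp w * (2/3 - w/3))
     (fun w => (1 - exp w * (1 - w)) / 3)).
  simpl in H. rewrite exp_0 in H.
  replace 0 with (2/3 + 0/3 - 1 * (2/3 - 0/3)) at 1 by field.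
  apply H; auto.
  - intros c _. auto_derive; auto. field.
  - intros c _. pose proof (exp_ineq1_le (- c)). pose proof (exp_pos c).
    assert (exp c * exp (-c) = 1) by (rewrite -exp_plus; replace (c + -c) with 0 by ring; apply exp_0).
    assert (exp c * (1 - c) <= 1) by nra. lra. }
assert (H := mono0 (fun v => 1 + 2 * v / 3 + v ^ 2 / 6 - exp v * (1 - v / 3))
   (fun w => 2/3 + w/3 - exp w * (2/3 - w/3))).
simpl in H. rewrite exp_0 in H.
assert (0 <= 1 + 2 * v / 3 + v * (v * 1) / 6 - exp v * (1 - v / 3)).
{ replace 0 with (1 + 2 * 0 / 3 + 0 * (0*1) / 6 - 1 * (1 - 0 / 3)) at 1 by field.
  apply H; auto. intros c _. auto_derive; auto. field. }
simpl. lra.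
Qed.


Lemma exp_mono a b : a <= b -> exp a <= exp b.
Proof. intros H. destruct (Req_dec a b) as [->|]; [lra|]. left; apply exp_increasing; lra. Qed.

Lemma exp45 : 2 <= exp (4/5).
Proof.
replace (4/5) with (1/5+1/5+1/5+1/5) by field. rewrite !exp_plus.
pose proof (exp_ineq1_le (1/5)). pose proof (exp_pos (1/5)).
assert (6/5 <= exp (1/5)) by lra.
assert (36/25 <= exp (1/5) * exp (1/5)) by nra.
nra.
Qed.

Lemma key (m x : R) : 0 < m -> 0 <= x ->
  1 + exp (- m) * (exp x - 1 - x) <= exp (9/10 * x ^ 2 / m).
Proof.
intros Hm Hx.
set (E := exp (x - m)).
assert (HE : E = exp (- m) * exp x) by (unfold E; rewrite -exp_plus; f_equal; ring).
assert (HEp : 0 < E) by apply exp_pos.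
assert (Hem : 0 < exp (- m)) by apply exp_pos.
pose proof (exp_taylor2 x Hx) as T.
pose proof (exp_ineq1_le x) as T1.
assert (Hq : 0 <= 9/10 * x^2/m) by (apply Rmult_le_pos; [nra| left; apply Rinv_0_lt_compat; lra]).
destruct (Rle_dec (m * E) (9/5)) as [B1|B2].
- set (z := exp (- m) * (exp x - 1 - x)).
  assert (Hz : z <= x ^ 2 / 2 * E).
  { unfold z. rewrite HE. assert (0 <= x^2/2) by nra. nra. }
  assert (Hz2 : x ^ 2 / 2 * E <= 9/10 * x ^ 2 / m).
  { assert (E <= 9/5 / m). { apply (Rmult_le_reg_l m); [lra|]. field_simplify; lra. }
    assert (0 <= x^2/2) by nra.
    replace (9/10 * x^2/m) with (x^2/2 * (9/5/m)) by (field; lra). nra. }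
  pose proof (exp_ineq1_le z). pose proof (exp_mono z (9/10*x^2/m)). lra.
- assert (Hz : exp (- m) * (exp x - 1 - x) <= E) by (rewrite HE; nra).
  set (y := x - m) in *. assert (HEy : E = exp y) by reflexivity.
  assert (Hxy : x = m + y) by (unfold y; ring). clearbody y E.
  destruct (Rle_dec 0 y) as [Hy|Hy].
  + assert (C : 4/5 + y <= 9/10 * x ^ 2 / m).
    { assert (9/10 * x^2/m = 9/10*m + 9/5*y + 9/10 * y^2/m) by (rewrite Hxy; field; lra).
      assert (0 <= y^2/m) by (apply Rmult_le_pos; [nra| left; apply Rinv_0_lt_compat; lra]).
      destruct (Rle_dec 1 y); [lra|].
      pose proof (exp_ineq1_le (- y)).
      assert (exp y * exp (-y) = 1) by (rewrite -exp_plus; replace (y + -y) with 0 by ring; apply exp_0).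
      assert (E * (1 - y) <= 1) by (rewrite HEy; nra).
      assert (m * (E * (1 - y)) <= m) by nra.
      assert (m * E * (1 - y) >= 9/5 * (1 - y)) by nra.
      nra. }
    pose proof (exp_mono _ _ C). rewrite exp_plus in H. pose proof exp45.
    assert (1 <= E) by (rewrite HEy -exp_0; apply exp_mono; lra).
    nra.
  + assert (Hk : x >= m * E).
    { pose proof (exp_ineq1_le (- y)).
      assert (exp y * exp (-y) = 1) by (rewrite -exp_plus; replace (y + -y) with 0 by ring; apply exp_0).
      subst E. rewrite HEy in B2 *. apply Rnot_le_lt in B2. apply Rnot_le_lt in Hy. nra. }
    assert (E <= 9/10 * x ^ 2 / m).
    { assert (9/10 * x^2/m >= 9/10 * (m*E)^2/m).
      { unfold Rdiv. apply Rle_ge, Rmult_le_compat_r; [left; apply Rinv_0_lt_compat; lra|]. nra. }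
      assert (9/10 * (m*E)^2/m = 9/10*(m*E) * E) by (field; lra). nra. }
    pose proof (exp_ineq1_le E). pose proof (exp_mono _ _ H). lra.
Qed.


End AnL.
Import AnL.


Lemma sum_le (I : finType) (P : pred I) (F G : I -> R) :
  (forall i, P i -> F i <= G i) -> \rsum_(i : I | P i) F i <= \rsum_(i : I | P i) G i.
Proof.
move=> H; apply: (big_ind2 (fun a b => a <= b)) => //; first lra.
by move=> *; lra.
Qed.

Lemma sum_ge0 (I : finType) (P : pred I) (F : I -> R) :
  (forall i, P i -> 0 <= F i) -> 0 <= \rsum_(i : I | P i) F i.
Proof.
move=> H; apply: (big_ind (fun a => Rle 0 a)) => //; first lra.
by move=> *; lra.
Qed.

Lemma prod_ge0 (I : finType) (P : pred I) (F : I -> R) :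
  (forall i, P i -> 0 <= F i) -> 0 <= \big[Rmult/1]_(i : I | P i) F i.
Proof.
move=> H; apply: (big_ind (fun a => Rle 0 a)) => //; first lra.
by move=> *; apply: Rmult_le_pos.
Qed.

Lemma prod_le (I : finType) (P : pred I) (F G : I -> R) :
  (forall i, P i -> 0 <= F i <= G i) ->
  \big[Rmult/1]_(i : I | P i) F i <= \big[Rmult/1]_(i : I | P i) G i.
Proof.
move=> H.
suff : 0 <= \big[Rmult/1]_(i : I | P i) F i <= \big[Rmult/1]_(i : I | P i) G i by case.
apply: (big_ind2 (fun a b => Rle 0 a /\ Rle a b)) => //; first lra.
by move=> a b c d [? ?] [? ?]; split; [apply: Rmult_le_pos | apply: Rmult_le_compat].
Qed.

Lemma exp_sum (I : finType) (P : pred I) (F : I -> R) :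
  exp (\rsum_(i : I | P i) F i) = \big[Rmult/1]_(i : I | P i) exp (F i).
Proof. by apply: (big_morph exp exp_plus exp_0). Qed.

Lemma Rleb_true x y : Rleb x y = true <-> x <= y.
Proof. by rewrite /Rleb; case: Rle_dec. Qed.

Definition wtu {A : finType} (p : A -> R) (gamma : nat -> R) (n : nat) (u : A)
  (x : {ffun 'I_n -> bool}) : R :=
  \rprod_(i : 'I_n) (if x i then Defs.pi p gamma i.+1 u else 1 - Defs.pi p gamma i.+1 u).

Definition slice {A : finType} {n : nat} (w : outcome A n) (u : A) : {ffun 'I_n -> bool} :=
  [ffun i => w (i, u)].

Lemma weightE (A : finType) (p : A -> R) (gamma : nat -> R) (n : nat) (w : outcome A n) :
  weight p gamma w = \rprod_(u : A) wtu p gamma n u (slice w u).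
Proof.
rewrite /weight /wtu.
pose F := fun (i : 'I_n) (u : A) =>
   if w (i, u) then Defs.pi p gamma i.+1 u else 1 - Defs.pi p gamma i.+1 u.
transitivity (\rprod_(iu : 'I_n * A) F iu.1 iu.2).
  by apply: eq_bigr => -[i u] _.
rewrite -(pair_bigA _ F) /= exchange_big; apply: eq_bigr => u _; apply: eq_bigr => i _.
by rewrite ffunE.
Qed.

Lemma sum_prod_slice (A : finType) (n : nat) (H : A -> {ffun 'I_n -> bool} -> R) :
  \rsum_(w : outcome A n) \rprod_(u : A) H u (slice w u) =
  \rprod_(u : A) \rsum_(x : {ffun 'I_n -> bool}) H u x.
Proof.
rewrite bigA_distr_bigA.
rewrite (reindex (fun f : {ffun A -> {ffun 'I_n -> bool}} =>
   ([ffun iu : 'I_n * A => f iu.2 iu.1] : outcome A n))) /=.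
  apply: eq_bigr => f _; apply: eq_bigr => u _; congr (H u _).
  by apply/ffunP => i; rewrite !ffunE.
apply: onW_bij.
exists (fun w : outcome A n => [ffun u => slice w u]).
  by move=> f; apply/ffunP => u; apply/ffunP => i; rewrite !ffunE.
by move=> w; apply/ffunP => [[i u]]; rewrite !ffunE.
Qed.

Lemma sum_wtu_prod (A : finType) (p : A -> R) (gamma : nat -> R) (n : nat) (u : A)
  (h : 'I_n -> bool -> R) :
  \rsum_(x : {ffun 'I_n -> bool}) (wtu p gamma n u x * \rprod_(i : 'I_n) h i (x i)) =
  \rprod_(i : 'I_n) (Defs.pi p gamma i.+1 u * h i true + (1 - Defs.pi p gamma i.+1 u) * h i false).
Proof.
transitivity (\rprod_(i : 'I_n) \rsum_(b : bool)
   ((if b then Defs.pi p gamma i.+1 u else 1 - Defs.pi p gamma i.+1 u) * h i b)); last first.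
  by apply: eq_bigr => i _; rewrite big_bool.
rewrite bigA_distr_bigA; apply: eq_bigr => x _.
rewrite /wtu -big_split /=; apply: eq_bigr => i _.
by [].
Qed.

Lemma sum_minus (I : finType) (F G : I -> R) :
  \rsum_(i : I) (F i - G i) = \rsum_(i : I) F i - \rsum_(i : I) G i.
Proof.
rewrite /Rminus big_split /=; congr (_ + _).
by symmetry; apply: (big_morph Ropp Ropp_plus_distr Ropp_0).
Qed.

Definition Zx {n : nat} (x : {ffun 'I_n -> bool}) : bool := [forall i, ~~ x i].
Definition Ex {n : nat} (x : {ffun 'I_n -> bool}) (i : 'I_n) : bool :=
  x i && [forall j, (j != i) ==> ~~ x j].

Definition Yu {A : finType} (p : A -> R) (gamma : nat -> R) (n : nat) (u : A)
  (x : {ffun 'I_n -> bool}) : R :=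
  (if Zx x then Defs.pi p gamma n.+1 u else 0)
  - / INR n * \rsum_(i : 'I_n) (if Ex x i then gamma n.+1 / gamma i.+1 else 0).

Lemma D_eq (A : finType) (p : A -> R) (gamma : nat -> R) (n : nat) (w : outcome A n) :
  Rn p gamma w - Rhat gamma w = \rsum_(u : A) Yu p gamma n u (slice w u).
Proof.
rewrite /Rn /Rhat big_distrr /= -sum_minus; apply: eq_bigr => u _.
rewrite /Yu /Zn /Zx /Ugam; congr (_ - _ * _).
  congr (if _ then _ else _); apply: eq_forallb => i; by rewrite ffunE.
apply: eq_bigr => i _; rewrite /Ex ffunE; congr (if _ && _ then _ else _).
apply: eq_forallb => j; by rewrite ffunE.
Qed.

Lemma Zp_eq (n : nat) (x : {ffun 'I_n -> bool}) :
  \rprod_(j : 'I_n) (if x j then 0 else 1) = if Zx x then 1 else 0.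
Proof.
rewrite /Zx; case: forallP => H.
  by apply: big1 => j _; rewrite (negbTE (H j)).
have [j xj] : exists j, x j.
  case: (pickP (fun j => x j)) => [j xj|x0]; first by exists j.
  by exfalso; apply: H => j; rewrite x0.
by rewrite (bigD1 j) //= xj Rmult_0_l.
Qed.

Lemma Ep_eq (n : nat) (x : {ffun 'I_n -> bool}) (i : 'I_n) :
  \rprod_(j : 'I_n) (if j == i then (if x j then 1 else 0) else (if x j then 0 else 1))
  = if Ex x i then 1 else 0.
Proof.
rewrite /Ex; case xi: (x i) => /=; last first.
  by rewrite (bigD1 i) //= eqxx xi Rmult_0_l.
case: forallP => H.
  rewrite (bigD1 i) //= eqxx xi Rmult_1_l; apply: big1 => j ji.
  by rewrite (negbTE ji); have := H j; rewrite ji /= => /negbTE ->.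
have [j /andP [ji xj]] : exists j, (j != i) && x j.
  case: (pickP (fun j => (j != i) && x j)) => [j xj|x0]; first by exists j.
  exfalso; apply: H => j; apply/implyP => ji; move: (x0 j); rewrite ji /=.
  by move=> ->.
by rewrite (bigD1 j) //= (negbTE ji) xj Rmult_0_l.
Qed.

Lemma Ex_uniq {n : nat} {x : {ffun 'I_n -> bool}} {i k : 'I_n} :
  Ex x k -> Ex x i -> i = k.
Proof.
move=> /andP [xk _] /andP [_ /forallP H].
apply/eqP; apply: contraT => ik.
have := H k; rewrite eq_sym ik /= xk. by [].
Qed.

Lemma Zx_Ex (n : nat) (x : {ffun 'I_n -> bool}) (i : 'I_n) : Zx x -> Ex x i = false.
Proof. by move=> /forallP H; rewrite /Ex (negbTE (H i)). Qed.

Lemma exp_Yu (A : finType) (p : A -> R) (gamma : nat -> R) (n : nat) (u : A)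
  (x : {ffun 'I_n -> bool}) (t : R) :
  exp (t * Yu p gamma n u x) =
  1 + (if Zx x then 1 else 0) * (exp (t * Defs.pi p gamma n.+1 u) - 1)
  + \rsum_(i : 'I_n) ((if Ex x i then 1 else 0) *
       (exp (t * - (/ INR n * (gamma n.+1 / gamma i.+1))) - 1)).
Proof.
rewrite /Yu; case Z: (Zx x).
  rewrite big1; last by move=> i _; rewrite Zx_Ex.
  rewrite big1; last by move=> i _; rewrite Zx_Ex // Rmult_0_l.
  replace (t * (Defs.pi p gamma n.+1 u - / INR n * 0)) with (t * Defs.pi p gamma n.+1 u) by ring; ring.
case: (pickP (Ex x)) => [k Ek | none].
  rewrite (bigD1 k) //= Ek big1; last first.
    by move=> i ik; case E: (Ex x i) => //; move: ik; rewrite (Ex_uniq Ek E) eqxx.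
  rewrite (bigD1 k) //= Ek big1; last first.
    by move=> i ik; case E: (Ex x i); [move: ik; rewrite (Ex_uniq Ek E) eqxx | rewrite Rmult_0_l].
  replace (0 - / INR n * (gamma n.+1 / gamma k.+1 + 0)) with (- (/ INR n * (gamma n.+1 / gamma k.+1))) by ring.
  ring.
rewrite big1; last by move=> i _; rewrite none.
rewrite big1; last by move=> i _; rewrite none Rmult_0_l.
replace (t * (0 - / INR n * 0)) with 0 by ring. rewrite exp_0. ring.
Qed.

Lemma sum_wtu1 (A : finType) (p : A -> R) (gamma : nat -> R) (n : nat) (u : A) :
  \rsum_(x : {ffun 'I_n -> bool}) wtu p gamma n u x = 1.
Proof.
have H := sum_wtu_prod _ p gamma n u (fun _ _ => 1); rewrite /= in H.
rewrite (eq_bigr (fun x => wtu p gamma n u x * \rprod_(i : 'I_n) 1)); last first.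
  by move=> x _; rewrite big1_eq Rmult_1_r.
rewrite H; apply: big1 => i _; ring.
Qed.

Lemma sum_wtuZ (A : finType) (p : A -> R) (gamma : nat -> R) (n : nat) (u : A) :
  \rsum_(x : {ffun 'I_n -> bool}) (wtu p gamma n u x * (if Zx x then 1 else 0)) =
  \rprod_(i : 'I_n) (1 - Defs.pi p gamma i.+1 u).
Proof.
have H := sum_wtu_prod _ p gamma n u (fun _ (b : bool) => if b then 0 else 1); rewrite /= in H.
rewrite (eq_bigr (fun x => wtu p gamma n u x * \rprod_(i : 'I_n) (if x i then 0 else 1))); last first.
  by move=> x _; rewrite Zp_eq.
rewrite H; apply: eq_bigr => i _; ring.
Qed.

Lemma sum_wtuE (A : finType) (p : A -> R) (gamma : nat -> R) (n : nat) (u : A) (i : 'I_n) :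
  \rsum_(x : {ffun 'I_n -> bool}) (wtu p gamma n u x * (if Ex x i then 1 else 0)) =
  \rprod_(j : 'I_n) (if j == i then Defs.pi p gamma j.+1 u else 1 - Defs.pi p gamma j.+1 u).
Proof.
have H := sum_wtu_prod _ p gamma n u (fun j (b : bool) => if j == i then (if b then 1 else 0)
                                else (if b then 0 else 1)); rewrite /= in H.
rewrite (eq_bigr (fun x => wtu p gamma n u x * \rprod_(j : 'I_n) (if j == i then (if x j then 1 else 0)
                                else (if x j then 0 else 1)))); last first.
  by move=> x _; rewrite Ep_eq.
rewrite H; apply: eq_bigr => j _; case: (j == i); ring.
Qed.

Lemma Mu_eq (A : finType) (p : A -> R) (gamma : nat -> R) (n : nat) (u : A) (t : R) :
  \rsum_(x : {ffun 'I_n -> bool}) (wtu p gamma n u x * exp (t * Yu p gamma n u x)) =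
  1 + (\rprod_(i : 'I_n) (1 - Defs.pi p gamma i.+1 u)) * (exp (t * Defs.pi p gamma n.+1 u) - 1)
  + \rsum_(i : 'I_n) ((\rprod_(j : 'I_n) (if j == i then Defs.pi p gamma j.+1 u
                                          else 1 - Defs.pi p gamma j.+1 u)) *
       (exp (t * - (/ INR n * (gamma n.+1 / gamma i.+1))) - 1)).
Proof.
set a := exp (t * Defs.pi p gamma n.+1 u) - 1.
set b := fun i : 'I_n => exp (t * - (/ INR n * (gamma n.+1 / gamma i.+1))) - 1.
transitivity (\rsum_(x : {ffun 'I_n -> bool}) (wtu p gamma n u x
   + (wtu p gamma n u x * (if Zx x then 1 else 0)) * a
   + \rsum_(i : 'I_n) ((wtu p gamma n u x * (if Ex x i then 1 else 0)) * b i))).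
  apply: eq_bigr => x _; rewrite exp_Yu -/a.
  rewrite !Rmult_plus_distr_l big_distrr /=; congr (_ + _ + _); first ring.
    ring.
  by apply: eq_bigr => i _; rewrite /b; ring.
rewrite !big_split /= sum_wtu1 -big_distrl /= sum_wtuZ exchange_big /=.
congr (_ + _ + _); apply: eq_bigr => i _.
by rewrite -big_distrl /= sum_wtuE.
Qed.

Lemma mgf_eq (A : finType) (p : A -> R) (gamma : nat -> R) (n : nat) (t : R) :
  \rsum_(w : outcome A n) (weight p gamma w * exp (t * (Rn p gamma w - Rhat gamma w))) =
  \rprod_(u : A) \rsum_(x : {ffun 'I_n -> bool}) (wtu p gamma n u x * exp (t * Yu p gamma n u x)).
Proof.
rewrite -(sum_prod_slice _ _ (fun u x => wtu p gamma n u x * exp (t * Yu p gamma n u x))).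
apply: eq_bigr => w _.
rewrite D_eq weightE big_distrr /= exp_sum big_split /=. by [].
Qed.

Lemma weight_ge0 (A : finType) (p : A -> R) (gamma : nat -> R) (n : nat)
  (hq : forall i u, (1 <= i)%nat -> 0 <= Defs.pi p gamma i u <= 1) (w : outcome A n) :
  0 <= weight p gamma w.
Proof.
apply: prod_ge0 => -[i u] _ /=; have [H1 H2] := hq i.+1 u isT; case: (w (i, u)) => /=; lra.
Qed.

Lemma prob_total (A : finType) (p : A -> R) (gamma : nat -> R) (n : nat) :
  \rsum_(w : outcome A n) weight p gamma w = 1.
Proof.
rewrite (eq_bigr (fun w => \rprod_(u : A) wtu p gamma n u (slice w u))); last first.
  by move=> w _; rewrite weightE.
rewrite sum_prod_slice; apply: big1 => u _; exact: sum_wtu1.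
Qed.

Lemma chernoff (A : finType) (p : A -> R) (gamma : nat -> R) (n : nat)
  (hq : forall i u, (1 <= i)%nat -> 0 <= Defs.pi p gamma i u <= 1)
  (D : outcome A n -> R) (t a : R) : 0 <= t ->
  prob p gamma (fun w => Rleb a (D w)) <=
  exp (- (t * a)) * \rsum_(w : outcome A n) (weight p gamma w * exp (t * D w)).
Proof.
move=> Ht; rewrite /prob big_mkcond big_distrr /=; apply: sum_le => w _.
have W := weight_ge0 _ _ _ _ hq w.
have E := exp_pos (- (t * a) + t * D w).
case: ifP => H.
  move/Rleb_true: H => H.
  rewrite -Rmult_assoc (Rmult_comm (exp _)) Rmult_assoc -exp_plus.
  have : 1 <= exp (- (t * a) + t * D w).
    rewrite -exp_0; apply: exp_mono; nra.
  nra.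
rewrite -Rmult_assoc (Rmult_comm (exp _)) Rmult_assoc -exp_plus.
nra.
Qed.

Lemma prob_mono (A : finType) (p : A -> R) (gamma : nat -> R) (n : nat)
  (hq : forall i u, (1 <= i)%nat -> 0 <= Defs.pi p gamma i u <= 1)
  (E F : outcome A n -> bool) : (forall w, E w -> F w) -> prob p gamma E <= prob p gamma F.
Proof.
move=> H; rewrite /prob big_mkcond [X in _ <= X]big_mkcond; apply: sum_le => w _.
have W := weight_ge0 _ _ _ _ hq w.
case: ifP => Ew; first by rewrite (H w Ew); lra.
case: ifP => _; lra.
Qed.

Lemma prob_and (A : finType) (p : A -> R) (gamma : nat -> R) (n : nat)
  (hq : forall i u, (1 <= i)%nat -> 0 <= Defs.pi p gamma i u <= 1)
  (E F : outcome A n -> bool) :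
  1 - prob p gamma (fun w => ~~ E w) - prob p gamma (fun w => ~~ F w) <=
  prob p gamma (fun w => E w && F w).
Proof.
rewrite -(prob_total _ p gamma n) /prob.
rewrite [\big[_/_]_(w | ~~ E w) _]big_mkcond [\big[_/_]_(w | ~~ F w) _]big_mkcond [\big[_/_]_(w | E w && F w) _]big_mkcond /=.
suff : \rsum_(w : outcome A n) weight p gamma w <=
  \rsum_(w : outcome A n) ((if E w && F w then weight p gamma w else 0)
   + (if ~~ E w then weight p gamma w else 0) + (if ~~ F w then weight p gamma w else 0)).
  rewrite !big_split /= => H; lra.
apply: sum_le => w _; have W := weight_ge0 _ _ _ _ hq w.
by case: (E w); case: (F w) => /=; lra.
Qed.

Lemma sum_const_ord (n : nat) (c : R) : \rsum_(j : 'I_n) c = INR n * c.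
Proof.
rewrite big_const_ord; elim: n => [|n IH]; first by rewrite /=; ring.
rewrite S_INR /= IH; ring.
Qed.

Lemma sum_opp (I : finType) (P : pred I) (F : I -> R) :
  \big[Rplus/0]_(i : I | P i) (- F i) = - \big[Rplus/0]_(i : I | P i) F i.
Proof. by symmetry; apply: (big_morph Ropp Ropp_plus_distr Ropp_0). Qed.

Definition Qi {A : finType} (p : A -> R) (gamma : nat -> R) (n : nat) (u : A) (i : 'I_n) : R :=
  \big[Rmult/1]_(j : 'I_n | j != i) (1 - Defs.pi p gamma j.+1 u).
Definition q0 {A : finType} (p : A -> R) (gamma : nat -> R) (n : nat) (u : A) : R :=
  \rprod_(j : 'I_n) (1 - Defs.pi p gamma j.+1 u).

Section PerU.
Variables (A : finType) (p : A -> R) (gamma : nat -> R) (n : nat) (u : A).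
Hypothesis hp : forall u, 0 <= p u <= 1.
Hypothesis hgamma : forall i, (1 <= i)%nat -> 0 < gamma i <= 1.
Hypothesis hmono : forall i j, (1 <= i)%nat -> (i <= j)%nat -> gamma j <= gamma i.

Let q (j : 'I_n) := Defs.pi p gamma j.+1 u.
Let s := Defs.pi p gamma n.+1 u.

Lemma q_bd j : 0 <= q j <= 1.
Proof. rewrite /q /Defs.pi; have := hp u; have := hgamma j.+1 isT; nra. Qed.

Lemma s_bd : 0 <= s <= p u.
Proof. rewrite /s /Defs.pi; have := hp u; have := hgamma n.+1 isT; nra. Qed.

Lemma s_le_q j : s <= q j.
Proof.
rewrite /s /q /Defs.pi; have := hp u; have := hmono j.+1 n.+1 isT (ltnW (ltn_ord j)).
have := hgamma j.+1 isT; nra.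
Qed.

Lemma g_bd (j : 'I_n) : 0 <= gamma n.+1 / gamma j.+1 <= 1.
Proof.
have := hmono j.+1 n.+1 isT (ltnW (ltn_ord j)); have := hgamma j.+1 isT; have := hgamma n.+1 isT.
move=> H1 H2 H3; split.
  apply: Rmult_le_pos; [lra| left; apply: Rinv_0_lt_compat; lra].
apply: (Rmult_le_reg_l (gamma j.+1)); first lra.
field_simplify; lra.
Qed.

Lemma qg (j : 'I_n) : q j * (gamma n.+1 / gamma j.+1) = s.
Proof. rewrite /q /s /Defs.pi; have := hgamma j.+1 isT => H; field; lra. Qed.

Lemma PE_eq (i : 'I_n) :
  \rprod_(j : 'I_n) (if j == i then Defs.pi p gamma j.+1 u else 1 - Defs.pi p gamma j.+1 u)
  = q i * Qi p gamma n u i.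
Proof.
rewrite (bigD1 i) //= eqxx; congr (_ * _); apply: eq_bigr => j /negbTE -> //.
Qed.

Lemma q0_eq (i : 'I_n) : q0 p gamma n u = (1 - q i) * Qi p gamma n u i.
Proof. by rewrite /q0 (bigD1 i). Qed.

Lemma Qi_bd (i : 'I_n) : 0 <= Qi p gamma n u i <= 1.
Proof.
split; first by apply: prod_ge0 => j _; have := q_bd j; rewrite /q; lra.
apply: (Rle_trans _ (\big[Rmult/1]_(j : 'I_n | j != i) 1)); last by rewrite big1_eq; lra.
by apply: prod_le => j _; have := q_bd j; rewrite /q; lra.
Qed.

Lemma q0_le_Qi (i : 'I_n) : 0 <= q0 p gamma n u <= Qi p gamma n u i.
Proof. rewrite (q0_eq i); have := Qi_bd i; have := q_bd i; nra. Qed.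

Lemma q0_exp : q0 p gamma n u <= exp (- (INR n * s)).
Proof.
apply: (Rle_trans _ (\rprod_(j : 'I_n) exp (- q j))).
  by apply: prod_le => j _; have := q_bd j; have := exp_ineq1_le (- q j); rewrite /q; lra.
rewrite -exp_sum; apply: exp_mono.
rewrite -sum_const_ord sum_opp.
apply: Ropp_le_contravar; apply: sum_le => j _; exact: s_le_q.
Qed.

Lemma sumQ : \rsum_(i : 'I_n) (q i * Qi p gamma n u i) <= 1.
Proof.
set S := \rsum_(j : 'I_n) q j.
have HS : 0 <= S by apply: sum_ge0 => j _; have := q_bd j; lra.
apply: (Rle_trans _ (\rsum_(i : 'I_n) (q i * exp (1 - S)))).
  apply: sum_le => i _.
  have Qe : Qi p gamma n u i <= exp (q i - S).
    apply: (Rle_trans _ (\big[Rmult/1]_(j : 'I_n | j != i) exp (- q j))).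
      by apply: prod_le => j _; have := q_bd j; have := exp_ineq1_le (- q j); rewrite /q; lra.
    rewrite -exp_sum; apply: exp_mono.
    rewrite sum_opp /S [X in _ <= _ - X](bigD1 i) //=; rewrite /Rminus Ropp_plus_distr -Rplus_assoc Rplus_opp_r Rplus_0_l; exact: Rle_refl.
  have := exp_mono (q i - S) (1 - S); have := q_bd i; nra.
rewrite -big_distrl /= -/S.
have E1 := exp_ineq1_le (S - 1).
have E2 : exp (1 - S) * exp (S - 1) = 1 by rewrite -exp_plus; replace (1 - S + (S - 1)) with 0 by ring; apply: exp_0.
have := exp_pos (1 - S); nra.
Qed.

Lemma bern (v k : R) : 0 <= v -> 0 < k -> k <= 1 - v / 3 -> exp v - 1 - v <= v ^ 2 / (2 * k).
Proof.
move=> Hv Hk Hk2.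
have B := exp_bern0 v Hv.
have T1 := exp_ineq1_le v.
have H1 : (exp v - 1 - v) * k <= v ^ 2 / 2 by nra.
apply: (Rmult_le_reg_r k) => //.
replace (v ^ 2 / (2 * k) * k) with (v ^ 2 / 2) by (field; lra). lra.
Qed.

Lemma Mu_upper (t : R) : (1 <= n)%nat -> 0 <= t ->
  \rsum_(x : {ffun 'I_n -> bool}) (wtu p gamma n u x * exp (t * Yu p gamma n u x))
  <= exp (7/5 * t ^ 2 * s / INR n).
Proof.
move=> Hn Ht; rewrite Mu_eq.
have HN : 0 < INR n by apply: lt_0_INR; apply/leP.
set N := INR n in HN *.
have [s0 sp] := s_bd.
have Hq0 := q0_le_Qi.
have T : forall i : 'I_n,
  \rprod_(j : 'I_n) (if j == i then Defs.pi p gamma j.+1 u else 1 - Defs.pi p gamma j.+1 u) *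
  (exp (t * - (/ N * (gamma n.+1 / gamma i.+1))) - 1)
  <= - (t / N) * s * q0 p gamma n u + (t / N) ^ 2 * s / 2.
  move=> i; rewrite PE_eq.
  have [g0 g1] := g_bd i. have qgi := qg i. have [Q0 Q1] := Qi_bd i.
  have [q00 q0Q] := Hq0 i. have [qi0 qi1] := q_bd i.
  set g := gamma n.+1 / gamma i.+1 in g0 g1 qgi *.
  set v := t * (/ N * g).
  have v0 : 0 <= v by rewrite /v; apply: Rmult_le_pos => //; apply: Rmult_le_pos => //; left; apply: Rinv_0_lt_compat.
  replace (t * - (/ N * g)) with (- v) by (rewrite /v; ring).
  have E := exp_neg_le v v0.
  set Q := Qi p gamma n u i in Q0 Q1 q0Q *.
  have e1 : q i * Q * v = t / N * s * Q by rewrite /v -qgi; field; lra.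
  have e2 : q i * Q * v ^ 2 = (t / N) ^ 2 * s * Q * g by rewrite /v -qgi; field; lra.
  have H1 : q i * Q * (exp (- v) - 1) <= q i * Q * (- v + v ^ 2 / 2).
    apply: Rmult_le_compat_l; first by apply: Rmult_le_pos.
    lra.
  have H2 : t / N * s * q0 p gamma n u <= t / N * s * Q.
    apply: Rmult_le_compat_l => //; apply: Rmult_le_pos => //.
    apply: Rmult_le_pos => //; left; apply: Rinv_0_lt_compat => //.
  have H3 : (t / N) ^ 2 * s * Q * g <= (t / N) ^ 2 * s.
    have c0 : 0 <= (t / N) ^ 2 * s by apply: Rmult_le_pos => //; apply: pow2_ge_0.
    have Qg : Q * g <= 1 by nra.
    have H := Rmult_le_compat_l _ _ _ c0 Qg.
    replace ((t / N) ^ 2 * s * Q * g) with ((t / N) ^ 2 * s * (Q * g)) by ring; lra.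
  have H4 : q i * Q * (- v + v ^ 2 / 2) = - (q i * Q * v) + (q i * Q * v ^ 2) / 2 by field.
  lra.
have S := sum_le _ predT _ _ (fun i _ => T i).
rewrite sum_const_ord in S.
set SS := \big[Rplus/0]_(i < n) _ in S *.
set q00 := q0 p gamma n u in Hq0 S *.
have qe := q0_exp.
fold N in qe. rewrite -/s in qe.
have X : 1 + q00 * (exp (t * s) - 1) + SS <=
         1 + q00 * (exp (t * s) - 1 - t * s) + t ^ 2 * s / (2 * N).
  have EE : N * (- (t / N) * s * q00 + (t / N) ^ 2 * s / 2) = - (t * s * q00) + t ^ 2 * s / (2 * N).
    by field; lra.
  rewrite EE in S. lra.
apply: (Rle_trans _ _ _ X).
have Eb := exp_ineq1_le (t ^ 2 * s / (2 * N)).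
have b0 : 0 <= t ^ 2 * s / (2 * N).
  apply: Rmult_le_pos; [apply: Rmult_le_pos => //; apply: pow2_ge_0 | left; apply: Rinv_0_lt_compat; lra].
have ex0 := exp_taylor2 (t * s) (Rmult_le_pos _ _ Ht s0).
have ex1 : 0 <= exp (t * s) - 1 - t * s by have := exp_ineq1_le (t * s); lra.
case: (Req_dec s 0) => [s00 | sn0].
  rewrite s00.
  replace (t * 0) with 0 by ring. replace (t ^ 2 * 0 / (2 * N)) with 0 by (field; lra).
  replace (7 / 5 * t ^ 2 * 0 / N) with 0 by (field; lra). rewrite exp_0.
  replace (1 - 1 - 0) with 0 by ring. lra.
have spos : 0 < s by lra.
have Hm : 0 < N * s by nra.
have K := key (N * s) (t * s) Hm (Rmult_le_pos _ _ Ht s0).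
have a1 : q00 * (exp (t * s) - 1 - t * s) <= exp (- (N * s)) * (exp (t * s) - 1 - t * s).
  by apply: Rmult_le_compat_r.
have kk : 9 / 10 * (t * s) ^ 2 / (N * s) = 9/10 * t ^ 2 * s / N by field; lra.
rewrite kk in K.
have a0 : 0 <= q00 * (exp (t * s) - 1 - t * s) by apply: Rmult_le_pos => //; rewrite /q00 /q0; apply: prod_ge0 => j _; have := q_bd j; rewrite /q; lra.
replace (7 / 5 * t ^ 2 * s / N) with (9/10 * t ^ 2 * s / N + t ^ 2 * s / (2 * N)) by (field; lra).
rewrite exp_plus.
have : 1 + q00 * (exp (t * s) - 1 - t * s) <= exp (9 / 10 * t ^ 2 * s / N) by lra.
have := exp_pos (9 / 10 * t ^ 2 * s / N).
nra.
Qed.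

Lemma Mu_lower (t : R) : (1 <= n)%nat -> 0 <= t -> t < 3 * INR n ->
  \rsum_(x : {ffun 'I_n -> bool}) (wtu p gamma n u x * exp ((- t) * Yu p gamma n u x))
  <= exp (t * p u / INR n + t ^ 2 * s / (INR n * (1 - t / (3 * INR n)))).
Proof.
move=> Hn Ht Ht3; rewrite Mu_eq.
have HN : 0 < INR n by apply: lt_0_INR; apply/leP.
set N := INR n in HN Ht3 *.
set k := 1 - t / (3 * N).
have k0 : 0 < k.
  rewrite /k; have : t / (3 * N) < 1; last lra.
  apply: (Rmult_lt_reg_r (3 * N)); first lra. field_simplify; lra.
have k1 : k <= 1.
  rewrite /k; have : 0 <= t / (3 * N); last lra.
  apply: Rmult_le_pos => //; left; apply: Rinv_0_lt_compat; lra.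
have [s0 sp] := s_bd.
have Hq0 := q0_le_Qi.
set q00 := q0 p gamma n u in Hq0 *.
have q00p : 0 <= q00.
  rewrite /q00 /q0; apply: prod_ge0 => j _; have := q_bd j; rewrite /q; lra.
have T : forall i : 'I_n,
  \rprod_(j : 'I_n) (if j == i then Defs.pi p gamma j.+1 u else 1 - Defs.pi p gamma j.+1 u) *
  (exp (- t * - (/ N * (gamma n.+1 / gamma i.+1))) - 1)
  <= t / N * s * Qi p gamma n u i + (t / N) ^ 2 * s / (2 * k).
  move=> i; rewrite PE_eq.
  have [g0 g1] := g_bd i. have qgi := qg i. have [Q0 Q1] := Qi_bd i.
  have [qi0 qi1] := q_bd i.
  set g := gamma n.+1 / gamma i.+1 in g0 g1 qgi *.
  set v := t * (/ N * g).
  have tN : 0 <= t / N by apply: Rmult_le_pos => //; left; apply: Rinv_0_lt_compat.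
  have v0 : 0 <= v by rewrite /v; apply: Rmult_le_pos => //; apply: Rmult_le_pos => //; left; apply: Rinv_0_lt_compat.
  have vle : v <= t / N.
    have -> : v = t / N * g by rewrite /v; field; lra.
    have := Rmult_le_compat_l _ _ _ tN g1; lra.
  have kv : k <= 1 - v / 3.
    rewrite /k; have : v / 3 <= t / (3 * N); last lra.
    replace (t / (3 * N)) with (t / N / 3) by (field; lra). lra.
  replace (- t * - (/ N * g)) with v by (rewrite /v; ring).
  have E := bern v k v0 k0 kv.
  set Q := Qi p gamma n u i in Q0 Q1 *.
  have e1 : q i * Q * v = t / N * s * Q by rewrite /v -qgi; field; lra.
  have e2 : q i * Q * (v ^ 2 / (2 * k)) = (t / N) ^ 2 * s / (2 * k) * (Q * g)
    by rewrite /v -qgi; field; lra.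
  have qQ0 : 0 <= q i * Q by apply: Rmult_le_pos.
  have H1 : q i * Q * (exp v - 1) <= q i * Q * (v + v ^ 2 / (2 * k)).
    by apply: Rmult_le_compat_l => //; lra.
  have c0 : 0 <= (t / N) ^ 2 * s / (2 * k).
    apply: Rmult_le_pos; [apply: Rmult_le_pos => //; apply: pow2_ge_0| left; apply: Rinv_0_lt_compat; lra].
  have Qg : Q * g <= 1 by nra.
  have H3 := Rmult_le_compat_l _ _ _ c0 Qg.
  have H4 : q i * Q * (v + v ^ 2 / (2 * k)) = q i * Q * v + q i * Q * (v ^ 2 / (2 * k)) by field; lra.
  lra.
have S := sum_le _ predT _ _ (fun i _ => T i).
rewrite big_split /= sum_const_ord -big_distrr /= in S.
have SQ : \rsum_(i : 'I_n) Qi p gamma n u i <= 1 + N * q00.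
  have := sumQ; rewrite -/q00 -(sum_const_ord n q00) => H.
  suff -> : \rsum_(i : 'I_n) Qi p gamma n u i =
     \rsum_(i : 'I_n) (q i * Qi p gamma n u i) + \rsum_(i : 'I_n) q00 by lra.
  rewrite -big_split /=; apply: eq_bigr => i _; rewrite /q00 (q0_eq i); ring.
have tNs : 0 <= t / N * s.
  apply: Rmult_le_pos => //; apply: Rmult_le_pos => //; left; apply: Rinv_0_lt_compat => //.
have S2 := Rmult_le_compat_l _ _ _ tNs SQ.
have Ee := exp_neg_le (t * s) (Rmult_le_pos _ _ Ht s0).
have F1 : q00 * (exp (- t * s) - 1) <= q00 * (- (t * s) + (t * s) ^ 2 / 2).
  apply: Rmult_le_compat_l => //.
  replace (- t * s) with (- (t * s)) by ring. lra.
have qs : q00 * (N * s) <= 1.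
  have qe := q0_exp. rewrite -/q00 -/N -/s in qe.
  have e1 := exp_ineq1_le (N * s).
  have e2 : exp (- (N * s)) * exp (N * s) = 1 by rewrite -exp_plus; replace (- (N * s) + N * s) with 0 by ring; apply: exp_0.
  have Ns0 : 0 <= N * s by nra.
  have := exp_pos (- (N * s)). nra.
have F2 : q00 * (t * s) ^ 2 / 2 <= t ^ 2 * s / (2 * N).
  have : q00 * (t * s) ^ 2 / 2 = t ^ 2 * s / (2 * N) * (q00 * (N * s)) by field; lra.
  move=> ->; have : 0 <= t ^ 2 * s / (2 * N).
    apply: Rmult_le_pos; [apply: Rmult_le_pos => //; apply: pow2_ge_0| left; apply: Rinv_0_lt_compat; lra].
  move=> c0; have := Rmult_le_compat_l _ _ _ c0 qs; lra.
have F3 : t ^ 2 * s / (2 * N) <= t ^ 2 * s / (2 * N * k).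
  have c0 : 0 <= t ^ 2 * s by apply: Rmult_le_pos => //; apply: pow2_ge_0.
  apply: Rmult_le_compat_l => //.
  apply: Rinv_le_contravar; first nra.
  have := Rmult_le_compat_l _ _ _ (Rlt_le _ _ (Rmult_lt_0_compat 2 N ltac:(lra) HN)) k1. lra.
have F4 : t / N * s <= t * p u / N.
  have : t / N * s = t / N * s by [].
  have tN : 0 <= t / N by apply: Rmult_le_pos => //; left; apply: Rinv_0_lt_compat.
  have := Rmult_le_compat_l _ _ _ tN sp.
  replace (t * p u / N) with (t / N * p u) by (field; lra). lra.
have EQ1 : N * ((t / N) ^ 2 * s / (2 * k)) = t ^ 2 * s / (2 * N * k) by field; lra.
have EQ2 : t / N * s * (1 + N * q00) = t / N * s + t * s * q00 by field; lra.
have EQ3 : t ^ 2 * s / (N * k) = t ^ 2 * s / (2 * N * k) + t ^ 2 * s / (2 * N * k) by field; lra.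
have EQ4 : q00 * (- (t * s) + (t * s) ^ 2 / 2) = - (t * s * q00) + q00 * (t * s) ^ 2 / 2 by field.
set Y := t * p u / N + t ^ 2 * s / (N * k).
have EY := exp_ineq1_le Y.
rewrite /Y in EY *. rewrite -/N in S.
have Eq0 : \rprod_(i : 'I_n) (1 - Defs.pi p gamma i.+1 u) = q00 by [].
rewrite Eq0 -/s.
set SQs := \rsum_(i : 'I_n) Qi p gamma n u i in S S2 *.
apply: (Rle_trans _ (1 + q00 * (exp (- t * s) - 1) +
   (t / N * s * SQs + N * ((t / N) ^ 2 * s / (2 * k))))).
  by apply: Rplus_le_compat_l; exact: S.
lra.
Qed.

End PerU.


Lemma arith_upper (b La N L K a : R) : 0 < La -> 0 < N -> 0 < K ->
  a ^ 2 = La * L / N -> 4 * K * a ^ 2 <= b ^ 2 ->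
  - (b * N / (2 * K * La) * b) + K * (b * N / (2 * K * La)) ^ 2 * La / N <= - L.
Proof.
move=> H1 H2 H3 Ha Hb.
have E : - (b * N / (2 * K * La) * b) + K * (b * N / (2 * K * La)) ^ 2 * La / N
   = - (b ^ 2 * N / (4 * K * La)) by field; lra.
rewrite E.
have EL : L = a ^ 2 * N / La by rewrite Ha; field; lra.
rewrite EL.
apply: Ropp_le_contravar.
have P : 0 <= N / (4 * K * La).
  apply: Rmult_le_pos; [lra | left; apply: Rinv_0_lt_compat; nra].
have := Rmult_le_compat_r _ _ _ P Hb.
have -> : 4 * K * a ^ 2 * (N / (4 * K * La)) = a ^ 2 * N / La by field; lra.
have -> : b ^ 2 * (N / (4 * K * La)) = b ^ 2 * N / (4 * K * La) by field; lra.
lra.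
Qed.

Lemma arith_lower (A La N L : R) : 0 < La -> 0 < N -> 0 <= A ->
  4 * La * L / N <= A ^ 2 ->
  let t := A / (2 * La / N + A / (3 * N)) in
  0 <= t /\ t < 3 * N /\
  - (t * (A + / (3 * N) * L)) + t ^ 2 * La / (N * (1 - t / (3 * N))) <= - L.
Proof.
move=> H1 H2 H3 H4 t.
have D : 0 < 2 * La / N + A / (3 * N).
  have : 0 < 2 * La / N by apply: Rmult_lt_0_compat; [lra| apply: Rinv_0_lt_compat].
  have : 0 <= A / (3 * N) by apply: Rmult_le_pos; [lra| left; apply: Rinv_0_lt_compat; lra].
  lra.
have t0 : 0 <= t by apply: Rmult_le_pos; [lra| left; apply: Rinv_0_lt_compat].
have Et : t / (3 * N) = A / (6 * La + A) by rewrite /t; field; nra.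
have t3 : t < 3 * N.
  have : A / (6 * La + A) < 1.
    apply: (Rmult_lt_reg_r (6 * La + A)); first lra. field_simplify; lra.
  rewrite -Et => H. have : t / (3 * N) * (3 * N) < 1 * (3 * N) by apply: Rmult_lt_compat_r; lra.
  have -> : t / (3 * N) * (3 * N) = t by field; lra. lra.
split => //; split => //.
have k : 1 - t / (3 * N) = 6 * La / (6 * La + A) by rewrite Et; field; lra.
rewrite k.
have E : - (t * (A + / (3 * N) * L)) + t ^ 2 * La / (N * (6 * La / (6 * La + A))) + L
   = (L * (2 * La / N) - A ^ 2 / 2) / (2 * La / N + A / (3 * N)).
  rewrite /t; field; split; try lra; split; try lra; nra.
have : (L * (2 * La / N) - A ^ 2 / 2) / (2 * La / N + A / (3 * N)) <= 0.
  have n0 : L * (2 * La / N) - A ^ 2 / 2 <= 0.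
    have : L * (2 * La / N) = (4 * La * L / N) / 2 by field; lra.
    lra.
  have := Rinv_0_lt_compat _ D.
  rewrite /Rdiv; nra.
lra.
Qed.

Lemma Mu_ge0 (A : finType) (p : A -> R) (gamma : nat -> R) (n : nat) (u : A) (t : R)
  (hq : forall i u, (1 <= i)%nat -> 0 <= Defs.pi p gamma i u <= 1) :
  0 <= \rsum_(x : {ffun 'I_n -> bool}) (wtu p gamma n u x * exp (t * Yu p gamma n u x)).
Proof.
apply: sum_ge0 => x _; apply: Rmult_le_pos; last by left; apply: exp_pos.
apply: prod_ge0 => i _; have [H1 H2] := hq i.+1 u isT; case: (x i) => /=; lra.
Qed.

Lemma sum_s (A : finType) (p : A -> R) (gamma : nat -> R) (n : nat) (c : R) :
  \rsum_(u : A) (c * Defs.pi p gamma n.+1 u) = c * lambda_m p gamma n.+1.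
Proof.
rewrite /lambda_m /lambda big_distrr big_distrr /=; apply: eq_bigr => u _.
rewrite /Defs.pi; ring.
Qed.

Lemma sum_p (A : finType) (p : A -> R) (c : R) :
  \rsum_(u : A) (c * p u) = c * lambda p.
Proof. by rewrite /lambda big_distrr. Qed.

Lemma mgf_upper_total (A : finType) (p : A -> R) (gamma : nat -> R)
  (hp : forall u, 0 <= p u <= 1)
  (hgamma : forall i, (1 <= i)%nat -> 0 < gamma i <= 1)
  (hmono : forall i j, (1 <= i)%nat -> (i <= j)%nat -> gamma j <= gamma i)
  (n : nat) (hn : (1 <= n)%nat) (t : R) (ht : 0 <= t) :
  \rsum_(w : outcome A n) (weight p gamma w * exp (t * (Rn p gamma w - Rhat gamma w)))
  <= exp (7/5 * t ^ 2 / INR n * lambda_m p gamma n.+1).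
Proof.
have hq : forall i u, (1 <= i)%nat -> 0 <= Defs.pi p gamma i u <= 1.
  move=> i u Hi; rewrite /Defs.pi; have := hp u; have := hgamma i Hi; nra.
rewrite mgf_eq.
apply: (Rle_trans _ (\rprod_(u : A) exp (7/5 * t ^ 2 / INR n * Defs.pi p gamma n.+1 u))).
  apply: prod_le => u _; split; first exact: Mu_ge0.
  have -> : 7/5 * t ^ 2 / INR n * Defs.pi p gamma n.+1 u =
            7/5 * t ^ 2 * Defs.pi p gamma n.+1 u / INR n by rewrite /Rdiv; ring.
  exact: Mu_upper.
by rewrite -exp_sum sum_s; apply: Rle_refl.
Qed.

Lemma mgf_lower_total (A : finType) (p : A -> R) (gamma : nat -> R)
  (hp : forall u, 0 <= p u <= 1)
  (hgamma : forall i, (1 <= i)%nat -> 0 < gamma i <= 1)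
  (hmono : forall i j, (1 <= i)%nat -> (i <= j)%nat -> gamma j <= gamma i)
  (n : nat) (hn : (1 <= n)%nat) (t : R) (ht : 0 <= t) (ht3 : t < 3 * INR n) :
  \rsum_(w : outcome A n) (weight p gamma w * exp ((- t) * (Rn p gamma w - Rhat gamma w)))
  <= exp (t / INR n * lambda p + t ^ 2 / (INR n * (1 - t / (3 * INR n))) * lambda_m p gamma n.+1).
Proof.
have hq : forall i u, (1 <= i)%nat -> 0 <= Defs.pi p gamma i u <= 1.
  move=> i u Hi; rewrite /Defs.pi; have := hp u; have := hgamma i Hi; nra.
rewrite mgf_eq.
apply: (Rle_trans _ (\rprod_(u : A) exp (t / INR n * p u +
     t ^ 2 / (INR n * (1 - t / (3 * INR n))) * Defs.pi p gamma n.+1 u))).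
  apply: prod_le => u _; split; first exact: Mu_ge0.
  have -> : t / INR n * p u + t ^ 2 / (INR n * (1 - t / (3 * INR n))) * Defs.pi p gamma n.+1 u
     = t * p u / INR n + t ^ 2 * Defs.pi p gamma n.+1 u / (INR n * (1 - t / (3 * INR n)))
     by rewrite /Rdiv; ring.
  exact: Mu_lower.
by rewrite -exp_sum big_split /= sum_p sum_s; apply: Rle_refl.
Qed.

Lemma Rleb_false {x y} : Rleb x y = false -> y < x.
Proof. rewrite /Rleb; case: Rle_dec => // H _; lra. Qed.

Lemma sqrt2_ge : 14/10 <= sqrt 2.
Proof.
have H := sqrt_sqrt 2 ltac:(lra). have := sqrt_pos 2.
case: (Rle_lt_dec (14/10) (sqrt 2)) => // H2 H3. nra.
Qed.

Theorem theorem3 (A : finType) (p : A -> R) (gamma : nat -> R)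
  (hp : forall u, 0 <= p u <= 1)
  (hgamma : forall i, (1 <= i)%nat -> 0 < gamma i <= 1)
  (hmono : forall i j, (1 <= i)%nat -> (i <= j)%nat -> gamma j <= gamma i)
  (n : nat) (hn : (1 <= n)%nat) (delta : R) (hdelta : 0 < delta < 1) :
  prob p gamma
    (fun w : outcome A n =>
       Rleb (- beta p gamma n delta - lambda p / INR n)
            (Rn p gamma w - Rhat gamma w)
       && Rleb (Rn p gamma w - Rhat gamma w) (beta p gamma n delta))
  >= 1 - delta.
Proof.
have hq : forall i u, (1 <= i)%nat -> 0 <= Defs.pi p gamma i u <= 1.
  move=> i u Hi; rewrite /Defs.pi; have := hp u; have := hgamma i Hi; nra.
have HN : 0 < INR n by apply: lt_0_INR; apply/leP.
have H4d : 0 < 4 / delta by apply: Rmult_lt_0_compat; [lra | apply: Rinv_0_lt_compat; lra].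
have HL : 0 < ln (4 / delta).
  rewrite -ln_1; apply: ln_increasing; first lra.
  apply: (Rmult_lt_reg_r delta); first lra. field_simplify; lra.
have eL : exp (- ln (4 / delta)) = delta / 4.
  by rewrite exp_Ropp exp_ln //; field; lra.
have [g0 g1] := hgamma n.+1 isT.
have lam0 : 0 <= lambda p by apply: sum_ge0 => u _; have := hp u; lra.
have Hb0 : 0 < / (3 * INR n) * ln (4 / delta).
  apply: Rmult_lt_0_compat => //; apply: Rinv_0_lt_compat; lra.
have Hs2 := sqrt2_ge.
case: (Rle_lt_or_eq_dec 0 (lambda p) lam0) => [lpos | lzero].
-
  set N := INR n in HN Hb0 *.
  set L := ln (4 / delta) in HL eL Hb0 *.
  set La := lambda_m p gamma n.+1.
  have HLa : 0 < La by rewrite /La /lambda_m; apply: Rmult_lt_0_compat.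
  set a := sqrt (La * L / N).
  have a2 : a ^ 2 = La * L / N.
    rewrite /a /= Rmult_1_r sqrt_sqrt //.
    apply: Rmult_le_pos; [nra | left; apply: Rinv_0_lt_compat; lra].
  have a0 : 0 <= a by apply: sqrt_pos.
  set AA := (1 + sqrt 2) * a.
  have AA0 : 0 <= AA by rewrite /AA; nra.
  have AA2 : 576/100 * a ^ 2 <= AA ^ 2.
    have hh : 576/100 <= (1 + sqrt 2) ^ 2 by nra.
    have := Rmult_le_compat_r _ _ _ (pow2_ge_0 a) hh.
    have -> : AA ^ 2 = (1 + sqrt 2) ^ 2 * a ^ 2 by rewrite /AA; ring.
    lra.
  have Eb : beta p gamma n delta = AA + / (3 * N) * L by [].
  rewrite Eb.
  set b := AA + / (3 * N) * L.
  have b0 : 0 <= b by rewrite /b; lra.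
  set D := fun w : outcome A n => Rn p gamma w - Rhat gamma w.
  have P1 : prob p gamma (fun w => ~~ Rleb (D w) b) <= delta / 4.
    apply: (Rle_trans _ (prob p gamma (fun w => Rleb b (D w)))).
      apply: prob_mono => // w; case E: (Rleb (D w) b) => //= _.
      apply/Rleb_true; have := Rleb_false E; lra.
    set th := b * N / (2 * (7/5) * La).
    have th0 : 0 <= th.
      apply: Rmult_le_pos; [apply: Rmult_le_pos; lra| left; apply: Rinv_0_lt_compat; lra].
    apply: (Rle_trans _ _ _ (chernoff _ p gamma n hq D th b th0)).
    have M := mgf_upper_total A p gamma hp hgamma hmono n hn th th0.
    apply: (Rle_trans _ (exp (- (th * b)) * exp (7 / 5 * th ^ 2 / N * La))).
      by apply: Rmult_le_compat_l; [left; apply: exp_pos | exact: M].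
    rewrite -exp_plus -eL; apply: exp_mono.
    have AU := arith_upper b La N L (7/5) a HLa HN ltac:(lra) a2.
    have : - (th * b) + 7 / 5 * th ^ 2 / N * La =
           - (b * N / (2 * (7 / 5) * La) * b) + 7 / 5 * (b * N / (2 * (7 / 5) * La)) ^ 2 * La / N.
      by rewrite /th /Rdiv; ring.
    move=> ->; apply: AU.
    have Hb2 : AA ^ 2 <= b ^ 2 by rewrite /b; nra.
    have : 0 <= a ^ 2 by apply: pow2_ge_0.
    move=> ?; lra.
  have P2 : prob p gamma (fun w => ~~ Rleb (- b - lambda p / N) (D w)) <= delta / 4.
    apply: (Rle_trans _ (prob p gamma (fun w => Rleb (b + lambda p / N) (- D w)))).
      apply: prob_mono => // w; case E: (Rleb _ (D w)) => //= _.
      apply/Rleb_true; have := Rleb_false E; lra.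
    have AL := arith_lower AA La N L HLa HN AA0.
    have h4 : 4 * La * L / N <= AA ^ 2.
      have e4 : 4 * La * L / N = 4 * (La * L / N) by rewrite /Rdiv; ring.
      have : 0 <= a ^ 2 by apply: pow2_ge_0.
      move=> ?; lra.
    move: (AL h4) => /= [th0 [th3 AL2]].
    set th := AA / (2 * La / N + AA / (3 * N)) in th0 th3 AL2.
    apply: (Rle_trans _ _ _ (chernoff _ p gamma n hq (fun w => - D w) th _ th0)).
    have M := mgf_lower_total A p gamma hp hgamma hmono n hn th th0 th3.
    rewrite -/N -/La in M.
    have EM : \rsum_(w : outcome A n) (weight p gamma w * exp (th * - D w)) =
              \rsum_(w : outcome A n) (weight p gamma w * exp (- th * (Rn p gamma w - Rhat gamma w))).
      by apply: eq_bigr => w _; rewrite /D; congr (_ * exp _); ring.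
    rewrite EM.
    apply: (Rle_trans _ (exp (- (th * (b + lambda p / N))) *
        exp (th / N * lambda p + th ^ 2 / (N * (1 - th / (3 * N))) * La))).
      by apply: Rmult_le_compat_l; [left; apply: exp_pos | exact: M].
    rewrite -exp_plus -eL; apply: exp_mono.
    have : - (th * (b + lambda p / N)) + (th / N * lambda p + th ^ 2 / (N * (1 - th / (3 * N))) * La)
       = - (th * (AA + / (3 * N) * L)) + th ^ 2 * La / (N * (1 - th / (3 * N))).
      by rewrite /b /Rdiv; ring.
    move=> ->; exact: AL2.
  have PA := prob_and _ p gamma n hq (fun w => Rleb (- b - lambda p / N) (D w))
                                     (fun w => Rleb (D w) b).
  apply: Rle_ge; apply: (Rle_trans _ _ _ _ PA).
  lra.
-
  have p0 : forall u, p u = 0.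
    move=> u; have [pu0 _] := hp u; apply: Rle_antisym => //.
    rewrite lzero /lambda (bigD1 u) //=.
    have : 0 <= \big[Rplus/0]_(i | i != u) p i by apply: sum_ge0 => v _; have := hp v; lra.
    move=> ?; lra.
  pose w0 : outcome A n := [ffun _ => false].
  have W0 : weight p gamma w0 = 1.
    apply: big1 => iu _; rewrite ffunE /Defs.pi p0; ring.
  have D0 : Rn p gamma w0 - Rhat gamma w0 = 0.
    rewrite /Rn /Rhat big1; last by move=> u _; rewrite /Defs.pi p0 Rmult_0_r; case: ifP.
    rewrite big1; last by move=> u _; rewrite /Ugam big1 // => i _; rewrite ffunE.
    ring.
  have bpos : 0 < beta p gamma n delta.
    rewrite /beta; have hb : 0 <= (1 + sqrt 2) * sqrt (lambda_m p gamma n.+1 * ln (4 / delta) / INR n).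
      apply: Rmult_le_pos; [lra | apply: sqrt_pos].
    lra.
  have Ew0 : (Rleb (- beta p gamma n delta - lambda p / INR n) (Rn p gamma w0 - Rhat gamma w0)
       && Rleb (Rn p gamma w0 - Rhat gamma w0) (beta p gamma n delta)).
    rewrite D0; apply/andP; split; apply/Rleb_true; rewrite -?lzero; last lra.
    rewrite /Rdiv Rmult_0_l; lra.
  apply: Rle_ge; rewrite /prob (bigD1 w0) //= W0.
  match goal with |- _ <= 1 + ?S => have HS : 0 <= S end.
    by apply: sum_ge0 => w _; apply: weight_ge0.
  lra.
Qed.
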